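(* Let $O$ be a total order of cardinality $\aleph$ (finite or infinite), and let $\alpha(\aleph)$ be the least ordinal of cardinality $\aleph$. Then $O$ has a strict binary questionable representation of length at most $\alpha(\aleph)+1$; more precisely, there is an order embedding of $O$ into $\mathrm{Next}(1,\alpha(\aleph)+1,(O^{0,1})_{\alpha(\aleph)+1})$ in which any two distinct images have a question.
   Context: Orders are partial orders (strict relation $<$); for elements $x,y$ we write $x\sim y$ when $x\neq y$ and neither $x<y$ nor $y<x$. $O^{0,1}$ denotes the two-element total order $0<1$. For an ordinal $j$, a sequence of orders $\mathcal O_j=(O_k)_{k<j}$ is indexed by the ordinals $k<j$; $(O')_j$ denotes the constant sequence with all items equal to $O'$. For an ordinal $\ell\le j$, a word of length $\ell$ over $\mathcal O_j$ is a sequence $X=(x_k)_{k<\ell}$ with $x_k\in\mathrm{Dom}(O_k)$. For two words $X,Y$, if there is a least ordinal $k<\min(\mathrm{len}X,\mathrm{len}Y)$ with $x_k\ne y_k$, then $(k,x_k,y_k)$ is the question of $X,Y$; otherwise $X,Y$ have no question. For ordinals $i<j$, $\mathrm{Next}(i,j,\mathcal O_j)$ is the partial order whose domain is the set of all words over $\mathcal O_j$ of length $\ell$ with $i\le\ell<j$, where $X<Y$ iff $X,Y$ have a question $(k,x_k,y_k)$ with $x_k<y_k$ in $O_k$; words with no question, or whose question has $x_k\sim y_k$ in $O_k$, are incomparable. A questionable representation of an order $O$ is an injective map $f$ from $\mathrm{Dom}(O)$ into $\mathrm{Dom}(\mathrm{Next}(i,j,\mathcal O_j))$ (for some $i<j$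 and $\mathcal O_j$) such that for all $x,y$: $f(x)<f(y)$ iff $x<y$ (so incomparability is also preserved). Its length is $j$, its width is the supremum of the cardinalities of the $\mathrm{Dom}(O_k)$, $k<j$. It is strict if any two distinct images have a question, total if every $O_k$ is a total order, and binary if it is total of width 2. *)

(* Defs.v *)
From Stdlib Require Import Relations Wellfounded.
Set Implicit Arguments.

Definition strict_order (T : Type) (lt : T -> T -> Prop) : Prop :=
  (forall x, ~ lt x x) /\ (forall x y z, lt x y -> lt y z -> lt x z).

Definition total_order (T : Type) (lt : T -> T -> Prop) : Prop :=
  strict_order lt /\ (forall x y, x <> y -> lt x y \/ lt y x).

Definition well_order (I : Type) (lt : I -> I -> Prop) : Prop :=
  total_order lt /\ well_founded lt.

Definition equinumerous (I T : Type) : Prop :=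
  exists (f : I -> T) (g : T -> I),
    (forall x, g (f x) = x) /\ (forall y, f (g y) = y).

(* The well-order (I, ltI) is an initial ordinal: every proper initial
   segment {k | k < i} has strictly smaller cardinality than I, i.e. there
   is no injection of I into {k | k < i}.  Together with [equinumerous I T],
   (I, ltI) is (isomorphic to) alpha(aleph), aleph = |T|. *)
Definition initial_ordinal (I : Type) (ltI : I -> I -> Prop) : Prop :=
  forall i : I, ~ exists g : I -> I,
      (forall a b, g a = g b -> a = b) /\ (forall k, ltI (g k) i).

(* Words over (O^{0,1})_{alpha+1}, alpha being represented by (I, ltI).
   Positions k < alpha+1 of interest are the elements of I (words have
   length <= alpha).  A length l with l <= alpha is encoded as [option I]:
   [Some i] is the length i (positions k < i), [None] is the length alpha
   (all positions of I).  Letters are booleans (false = 0 < 1 = true);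
   letters at positions >= length are irrelevant. *)
Definition word (I : Type) : Type := (option I * (I -> bool))%type.

Definition below (I : Type) (ltI : I -> I -> Prop) (l : option I) (k : I)
  : Prop :=
  match l with Some i => ltI k i | None => True end.

(* Length l satisfies 1 <= l (l <= alpha < alpha+1 holds by encoding). *)
Definition word_in_Next1 (I : Type) (ltI : I -> I -> Prop) (w : word I)
  : Prop :=
  exists k, below ltI (fst w) k.

Definition is_question (I : Type) (ltI : I -> I -> Prop) (X Y : word I)
  (k : I) : Prop :=
  below ltI (fst X) k /\ below ltI (fst Y) k /\ snd X k <> snd Y k /\
  (forall j, ltI j k -> snd X j = snd Y j).

Definition has_question (I : Type) (ltI : I -> I -> Prop) (X Y : word I)
  : Prop := exists k, is_question ltI X Y k.

Definition next_lt (I : Type) (ltI : I -> I -> Prop) (X Y : word I)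
  : Prop :=
  exists k, is_question ltI X Y k /\ snd X k = false /\ snd Y k = true.

(* Main.v *)
Require Import Defs.
From Stdlib Require Import Classical ClassicalEpsilon.

Definition letter (P : Prop) : bool :=
  if excluded_middle_informative P then true else false.

Lemma letter_true (P : Prop) : letter P = true <-> P.
Proof. unfold letter; destruct (excluded_middle_informative P); split; intros; try tauto; discriminate. Qed.

Lemma letter_false (P : Prop) : letter P = false <-> ~ P.
Proof. unfold letter; destruct (excluded_middle_informative P); split; intros; try tauto; discriminate. Qed.

Lemma least_ex (I : Type) (ltI : I -> I -> Prop) (P : I -> Prop) :
  well_founded ltI -> forall k0, P k0 -> exists k, P k /\ forall j, ltI j k -> ~ P j.
Proof.
  intros wf k0 Hk0. apply NNPP; intros Hn.
  assert (forall k, ~ P k) as H.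
  { intro k. induction k as [k IH] using (well_founded_ind wf).
    intro Pk. apply Hn. exists k. split; auto. }
  exact (H k0 Hk0).
Qed.

Theorem mainTheorem1 (T : Type) (lt : T -> T -> Prop) (I : Type)
  (ltI : I -> I -> Prop) :
  total_order lt ->
  well_order ltI -> initial_ordinal ltI -> equinumerous I T ->
  exists f : T -> word I,
    (forall x, word_in_Next1 ltI (f x)) /\
    (forall x y, lt x y <-> next_lt ltI (f x) (f y)) /\
    (forall x y, x <> y -> has_question ltI (f x) (f y)).
Proof.
  intros [[irr tr] tot] [_ wf] _ [e [g [Hge Heg]]].
  set (le := fun a b => lt a b \/ a = b).
  exists (fun x => (None, fun k => letter (le (e k) x))).
  assert (key : forall x y, lt x y -> exists k,
     is_question ltI (None, fun k => letter (le (e k) x))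
                     (None, fun k => letter (le (e k) y)) k /\
     letter (le (e k) x) = false /\ letter (le (e k) y) = true).
  { intros x y Hxy.
    destruct (@least_ex I ltI (fun k => le (e k) y /\ ~ le (e k) x) wf (g y))
      as [k [[Hk1 Hk2] Hmin]].
    { rewrite Heg. split. right; reflexivity.
      intros [H|H]. apply (irr y). eauto. subst. apply (irr x); auto. }
    exists k. split; [|split; [apply letter_false; auto | apply letter_true; auto]].
    split; [exact Logic.I|]. split; [exact Logic.I|]. simpl. split.
    - rewrite (proj2 (letter_false _) Hk2), (proj2 (letter_true _) Hk1). discriminate.
    - intros j Hj. specialize (Hmin j Hj).
      destruct (classic (le (e j) x)) as [Hx|Hx].
      + assert (le (e j) y).
        { destruct Hx as [Hx|Hx]; left; [eauto | subst; auto]. }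
        rewrite (proj2 (letter_true _) Hx), (proj2 (letter_true _) H). reflexivity.
      + assert (~ le (e j) y) by (intro; apply Hmin; auto).
        rewrite (proj2 (letter_false _) Hx), (proj2 (letter_false _) H). reflexivity. }
  split; [|split].
  - intro x. exists (g x). exact Logic.I.
  - intros x y. split.
    + intro H. destruct (key x y H) as [k [A [B C]]]. exists k. auto.
    + intros [k [A [B C]]]. simpl in B, C.
      apply (proj1 (letter_false _)) in B. apply (proj1 (letter_true _)) in C.
      destruct (classic (e k = x)) as [E|E]. exfalso; apply B; right; auto.
      destruct (tot _ _ E) as [H|H]. exfalso; apply B; left; auto.
      destruct C as [C|C]; [eauto | subst; auto].
  - intros x y Hxy. destruct (tot _ _ Hxy) as [H|H].
    + destruct (key x y H) as [k [A _]]. exists k. exact A.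
    + destruct (key y x H) as [k [[A1 [A2 [A3 A4]]] _]]. exists k.
      split; [exact Logic.I|]. split; [exact Logic.I|]. split.
      * intro. apply A3. symmetry. auto.
      * intros j Hj. symmetry. auto.
Qed.
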